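(* Let $k=k(n)$ be integers with $1\le k=O(\log n)$ and let $h(n)=o(n/\log^2 n)$. For every $\eta>0$ there is $n_0$ such that for all $n\ge n_0$ and every $X\subseteq Q=\{0,1\}^n$ with $\mu(X)\ge\exp[-h(n)]$, if $x$ is chosen uniformly from $X$ then $$\Pr(T(x)\in X)<(1+\eta)\mu(X).$$
   Context: $Q=\{0,1\}^n$ with uniform probability measure $\mu$. For $x\in Q$, $T(x)$ is the random element of $Q$ obtained by choosing $K$ uniformly from the $k$-subsets of $[n]$, keeping $x_i$ for $i\in K$, and replacing each $x_i$ with $i\notin K$ by an independent uniform bit (independently of everything else, including the choice of $x$). *)

(* Defs.v *)
From mathcomp Require Import all_boot.

Definition cube (n : nat) : finType := {ffun 'I_n -> bool}.
Definition cube_set (n : nat) : Type := {set cube n}.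

Definition card_cube_set (n : nat) (X : cube_set n) : nat := #|X|.

Definition agree (n : nat) (K : {set 'I_n}) (x y : cube n) : bool :=
  [forall i in K, x i == y i].

(* Given x and K, T(x) is uniform on the 2^(n-k) points
   agreeing with x on K, so
   Pr(T(x) in X) = trans_count / (|X| * C(n,k) * 2^(n-k))  for x uniform in X. *)
Definition trans_count (n k : nat) (X : cube_set n) : nat :=
  \sum_(x in X) \sum_(K : {set 'I_n} | #|K| == k)
     #|[set y in X | @agree n K x y]|.

Definition nbinom (n k : nat) : nat := 'C(n, k).

From Stdlib Require Import Reals.
Local Open Scope R_scope.

Definition mu (n : nat) (X : cube_set n) : R :=
  INR (@card_cube_set n X) / (2 ^ n).

Definition prob_TX (n k : nat) (X : cube_set n) : R :=
  INR (@trans_count n k X) /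
  (INR (@card_cube_set n X) * INR (nbinom n k) * 2 ^ (n - k)%nat).

(* Main.v *)
Require Import Defs.
From Stdlib Require Import Reals.
From Stdlib Require Import Lra Psatz.
Open Scope R_scope.

Module CQ.
From Coquelicot Require Import Coquelicot.
Lemma ln_lb_c t c : 0 < c -> 0 < t <= 1 ->
  0 < ln (1+t) - (t + t^2/3)/(1+t) + c * t.
Proof.
intros Hc Ht.
set (f := fun x => ln (1+x) - (x + x^2/3)/(1+x) + c * x).
assert (H0 : f 0 = 0).
{ unfold f. replace (1+0) with 1 by ring. rewrite ln_1. field. }
assert (Hinc : f 0 < f t).
{ apply (incr_function_le f (Finite 0) (Finite 1)
    (fun x => x * (1 - x) / (3 * (1+x)^2) + c)).
  - intros x Hx1 Hx2; simpl in Hx1, Hx2. unfold f.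
    auto_derive.
    + repeat split; lra.
    + field_simplify; try lra. 
      all: try (field; lra).
  - intros x Hx1 Hx2; simpl in Hx1, Hx2.
    assert (0 <= x * (1 - x) / (3 * (1+x)^2)).
    { apply Rmult_le_pos. nra. apply Rlt_le, Rinv_0_lt_compat. nra. }
    lra.
  - simpl; lra.
  - lra.
  - simpl; lra. }
unfold f in *. lra.
Qed.

End CQ.

Lemma Rdiv_le_0_compat' a b : 0 <= a -> 0 < b -> 0 <= a / b.
Proof. intros. unfold Rdiv. apply Rmult_le_pos; [lra| left; apply Rinv_0_lt_compat; lra]. Qed.

Lemma ln_lb t : 0 <= t <= 1 -> t + t^2/3 <= (1+t) * ln (1+t).
Proof.
intros Ht. destruct (Req_dec t 0) as [->|Hn].
{ replace (1+0) with 1 by ring. rewrite ln_1. lra. }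
assert (Hge : (t + t^2/3)/(1+t) <= ln (1+t)).
{ apply Rnot_lt_le; intro Hlt.
  set (d := (t + t^2/3)/(1+t) - ln (1+t)).
  assert (Hd : 0 < d) by (unfold d; lra).
  assert (Hc : 0 < d / (2*t)) by (apply Rdiv_lt_0_compat; lra).
  pose proof (CQ.ln_lb_c t (d/(2*t)) Hc ltac:(lra)).
  replace (d / (2*t) * t) with (d/2) in H by (field; lra).
  unfold d in H. lra. }
apply Rmult_le_compat_l with (r := 1+t) in Hge; [|lra].
replace ((1 + t) * ((t + t ^ 2 / 3) / (1 + t))) with (t + t^2/3) in Hge by (field; lra).
exact Hge.
Qed.

Lemma ylny y : 0 < y -> y - 1 <= y * ln y.
Proof.
intros Hy. pose proof (exp_ineq1_le (ln (/ y))) as H.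
rewrite exp_ln in H by (apply Rinv_0_lt_compat; lra).
rewrite ln_Rinv in H by lra.
assert (H2 : y * (1 - ln y) <= y * / y) by (apply Rmult_le_compat_l; lra).
rewrite Rinv_r in H2 by lra. nra.
Qed.

Definition pw (x a : R) : R := if Rlt_dec 0 x then exp (a * ln x) else 0.

Lemma pw_pos x a : 0 < x -> pw x a = exp (a * ln x).
Proof. intros H. unfold pw. destruct (Rlt_dec 0 x); [reflexivity|lra]. Qed.

Lemma pw_npos x a : x <= 0 -> pw x a = 0.
Proof. intros H. unfold pw. destruct (Rlt_dec 0 x); [lra|reflexivity]. Qed.

Lemma pw_ge0 x a : 0 <= pw x a.
Proof. unfold pw. destruct (Rlt_dec 0 x); [apply Rlt_le, exp_pos|lra]. Qed.

Lemma pw_gt0 x a : 0 < x -> 0 < pw x a.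
Proof. intros H. rewrite pw_pos by exact H. apply exp_pos. Qed.

Lemma pw_pw x a b : 0 <= x -> pw (pw x a) b = pw x (a*b).
Proof.
intros H. destruct (Req_dec x 0) as [->|Hn].
{ rewrite (pw_npos 0 a) by lra. rewrite !pw_npos by lra. reflexivity. }
rewrite (pw_pos x) by lra. rewrite pw_pos by apply exp_pos.
rewrite pw_pos by lra. rewrite ln_exp. f_equal; ring.
Qed.

Lemma pw_one x : 0 <= x -> pw x 1 = x.
Proof.
intros H. destruct (Req_dec x 0) as [->|Hn]. { apply pw_npos; lra. }
rewrite pw_pos by lra. rewrite Rmult_1_l. apply exp_ln. lra.
Qed.

Lemma pwM x y a : 0 <= x -> 0 <= y -> pw (x*y) a = pw x a * pw y a.
Proof.
intros Hx Hy. destruct (Req_dec x 0) as [->|Hn].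
{ rewrite Rmult_0_l, !(pw_npos 0) by lra. ring. }
destruct (Req_dec y 0) as [->|Hn'].
{ rewrite Rmult_0_r, !(pw_npos 0) by lra. ring. }
rewrite !pw_pos by nra. rewrite ln_mult by lra. rewrite <- exp_plus. f_equal; ring.
Qed.

Lemma pw_ge1 x a : 1 <= x -> 1 <= a -> x <= pw x a.
Proof.
intros Hx Ha. rewrite pw_pos by lra.
assert (Hl : 0 <= ln x).
{ destruct (Req_dec x 1) as [->|Hn]. rewrite ln_1; lra. left; rewrite <- ln_1; apply ln_increasing; lra. }
rewrite <- (exp_ln x) at 1 by lra.
destruct (Req_dec (ln x) (a * ln x)) as [E|E]. { rewrite <- E. lra. }
left. apply exp_increasing. nra.
Qed.

Lemma pw_sq x a : (pw x a)^2 = pw x (2*a).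
Proof.
unfold pw. destruct (Rlt_dec 0 x). 2: ring.
simpl. rewrite Rmult_1_r, <- exp_plus. f_equal. ring.
Qed.

Lemma pw_lb e y : 0 < y -> y * (1 + e * ln y) <= pw y (1+e).
Proof.
intros Hy. rewrite pw_pos by exact Hy.
replace ((1+e) * ln y) with (ln y + e * ln y) by ring.
rewrite exp_plus, exp_ln by exact Hy.
apply Rmult_le_compat_l; [lra|]. apply exp_ineq1_le.
Qed.

Lemma A_lb e t : 0 < e -> 0 <= t <= 1 ->
  2 + e*t^2/3 <= pw (1+t) (1+e) + pw (1-t) (1+e).
Proof.
intros He Ht.
assert (H1 : 1 + t + e * (t + t^2/3) <= pw (1+t) (1+e)).
{ pose proof (pw_lb e (1+t) ltac:(lra)). pose proof (ln_lb t Ht). nra. }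
assert (H2 : 1 - t - e * t <= pw (1-t) (1+e)).
{ destruct (Req_dec t 1) as [->|Hn].
  - rewrite pw_npos by lra. lra.
  - pose proof (pw_lb e (1-t) ltac:(lra)). pose proof (ylny (1-t) ltac:(lra)). nra. }
nra.
Qed.

Lemma L1 e u v : 0 < e <= 1 -> 0 <= u -> 0 <= v ->
  (u+v)^2 + (e/6)*(u-v)^2 <= 4 * (pw ((pw u (1+e) + pw v (1+e))/2) (/(1+e)))^2.
Proof.
intros He.
assert (Main : forall u v, 0 <= v <= u ->
  (u+v)^2 + (e/6)*(u-v)^2 <= 4 * (pw ((pw u (1+e) + pw v (1+e))/2) (/(1+e)))^2).
{ clear u v. intros u v Huv.
  destruct (Req_dec u 0) as [Hu0|Hu0].
  { assert (v = 0) by lra. subst. pose proof (pw_ge0 ((pw 0 (1 + e) + pw 0 (1 + e)) / 2) (/ (1 + e))). nra. }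
  set (s := (u+v)/2). set (t := (u-v)/(u+v)).
  assert (Hs : 0 < s) by (unfold s; lra).
  assert (Ht : 0 <= t <= 1).
  { unfold t. split. apply Rdiv_le_0_compat'; lra.
    apply Rmult_le_reg_r with (r := u+v). lra.
    unfold Rdiv. rewrite Rmult_assoc, Rinv_l by lra. lra. }
  assert (Eu : u = s * (1+t)) by (unfold s, t; field; lra).
  assert (Ev : v = s * (1-t)) by (unfold s, t; field; lra).
  set (A := (pw (1+t) (1+e) + pw (1-t) (1+e))/2).
  assert (HA : 1 + e*t^2/6 <= A) by (unfold A; pose proof (A_lb e t ltac:(lra) Ht); lra).
  assert (Esum : (pw u (1+e) + pw v (1+e))/2 = pw s (1+e) * A).
  { rewrite Eu, Ev. rewrite !pwM by lra. unfold A. field. }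
  assert (HA0 : 1 <= A) by (assert (0 <= e*t^2/6) by (apply Rmult_le_pos; [apply Rmult_le_pos; nra|lra]); lra).
  rewrite Esum. rewrite pwM by (try apply pw_ge0; lra).
  rewrite pw_pw by lra.
  replace ((1+e) * / (1+e)) with 1 by (field; lra).
  rewrite pw_one by lra.
  assert (HB : A <= (pw A (/(1+e)))^2).
  { rewrite pw_sq. apply pw_ge1. nra.
    apply Rmult_le_reg_r with (r := 1+e). lra.
    rewrite Rmult_assoc, Rinv_l by lra. lra. }
  assert (Hst : u - v = 2*s*t) by (rewrite Eu, Ev; ring).
  assert (Hsum : u + v = 2*s) by (unfold s; field).
  rewrite Hst, Hsum.
  replace (4 * (s * pw A (/ (1 + e))) ^ 2) with (4 * s^2 * (pw A (/ (1 + e)))^2) by ring.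
  assert (0 <= s^2) by nra.
  assert (4*s^2*A <= 4 * s^2 * (pw A (/ (1 + e)))^2) by (apply Rmult_le_compat_l; nra).
  nra. }
intros Hu Hv. destruct (Rle_dec v u).
- apply Main; lra.
- replace ((u+v)^2 + (e/6)*(u-v)^2) with ((v+u)^2 + (e/6)*(v-u)^2) by ring.
  replace (pw u (1 + e) + pw v (1 + e)) with (pw v (1 + e) + pw u (1 + e)) by ring.
  apply Main; lra.
Qed.

Definition Psi e x := pw x (/(1+e)).

Lemma TP e a0 a1 b0 b1 : 0 < e <= 1 -> 0 <= a0 -> 0 <= a1 -> 0 <= b0 -> 0 <= b1 ->
  (1+e/6)*(Psi e a0 * Psi e b0 + Psi e a1 * Psi e b1)
  + (1-e/6)*(Psi e a0 * Psi e b1 + Psi e a1 * Psi e b0)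
  <= 4 * Psi e ((a0+a1)/2) * Psi e ((b0+b1)/2).
Proof.
intros He H0 H1 H2 H3.
assert (Inv : forall a, 0 <= a -> pw (Psi e a) (1+e) = a).
{ intros a Ha. unfold Psi. rewrite pw_pw by exact Ha.
  replace (/ (1 + e) * (1 + e)) with 1 by (field; lra). apply pw_one; exact Ha. }
pose proof (L1 e (Psi e a0) (Psi e a1) He (pw_ge0 _ _) (pw_ge0 _ _)) as La.
pose proof (L1 e (Psi e b0) (Psi e b1) He (pw_ge0 _ _) (pw_ge0 _ _)) as Lb.
rewrite !Inv in La, Lb by assumption.
fold (Psi e ((a0+a1)/2)) in La. fold (Psi e ((b0+b1)/2)) in Lb.
set (M := Psi e ((a0+a1)/2)) in *. set (N := Psi e ((b0+b1)/2)) in *.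
assert (HM : 0 <= M) by apply pw_ge0. assert (HN : 0 <= N) by apply pw_ge0.
set (U := Psi e a0 + Psi e a1) in *. set (D := Psi e a0 - Psi e a1) in *.
set (V := Psi e b0 + Psi e b1) in *. set (E := Psi e b0 - Psi e b1) in *.
assert (Heq : (1+e/6)*(Psi e a0 * Psi e b0 + Psi e a1 * Psi e b1)
  + (1-e/6)*(Psi e a0 * Psi e b1 + Psi e a1 * Psi e b0) = U*V + (e/6)*D*E)
  by (unfold U, V, D, E; ring).
rewrite Heq. clearbody U D V E M N.
assert (CS : (U*V + (e/6)*D*E)^2 <= (U^2 + (e/6)*D^2) * (V^2 + (e/6)*E^2)).
{ assert (0 <= (e/6) * (U*E - D*V)^2) by (apply Rmult_le_pos; [lra|apply pow2_ge_0]).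
  assert ((U^2 + (e/6)*D^2) * (V^2 + (e/6)*E^2) - (U*V + (e/6)*D*E)^2 = (e/6) * (U*E - D*V)^2) by ring.
  lra. }

assert (P1 : 0 <= U^2 + (e/6)*D^2) by (assert (0 <= (e/6)*D^2) by (apply Rmult_le_pos; [lra|apply pow2_ge_0]); nra).
assert (P2 : 0 <= V^2 + (e/6)*E^2) by (assert (0 <= (e/6)*E^2) by (apply Rmult_le_pos; [lra|apply pow2_ge_0]); nra).
assert (Q : (U*V + (e/6)*D*E)^2 <= (4*M^2)*(4*N^2)).
{ eapply Rle_trans. exact CS. apply Rmult_le_compat; nra. }
assert (H4 : 0 <= 4*M*N) by (apply Rmult_le_pos; lra).
destruct (Rle_dec (U*V + (e/6)*D*E) (4*M*N)) as [Hle|Hgt]; [exact Hle|].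
exfalso. apply Rnot_le_lt in Hgt.
assert ((4*M*N)*(4*M*N) < (U*V + (e/6)*D*E)*(U*V + (e/6)*D*E)).
{ apply Rmult_le_0_lt_compat; lra. }
assert ((U * V + e / 6 * D * E) ^ 2 = (U*V + (e/6)*D*E)*(U*V + (e/6)*D*E)) by ring.
assert (4 * M ^ 2 * (4 * N ^ 2) = (4*M*N)*(4*M*N)) by ring.
lra.
Qed.

Lemma ln_le_sub1 y : 0 < y -> ln y <= y - 1.
Proof. intros Hy. pose proof (exp_ineq1_le (ln y)). rewrite exp_ln in H by lra. lra. Qed.

Lemma exp_pow_INR a n : exp a ^ n = exp (INR n * a).
Proof.
induction n as [|n IH]. simpl. rewrite Rmult_0_l, exp_0. reflexivity.
rewrite S_INR, <- tech_pow_Rmult, IH, <- exp_plus. f_equal. ring.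
Qed.

Lemma asym (k : nat -> nat) (h : nat -> R)
  (hk1 : forall n : nat, (1 <= k n)%nat)
  (hkO : exists (C : R) (N : nat), forall n : nat, (N <= n)%nat ->
           INR (k n) <= C * ln (INR n))
  (ho : forall eps : R, 0 < eps -> exists N : nat, forall n : nat, (N <= n)%nat ->
           Rabs (h n) <= eps * (INR n / (ln (INR n)) ^ 2))
  (eta : R) (heta : 0 < eta) :
  exists (M : R) (n0 : nat), 0 < M /\ forall n, (n0 <= n)%nat ->
   0 < 12 * (1 + M) * INR (k n) / INR n <= 1 /\ (k n <= n)%nat /\
   0 < 1 - 2 ^ (k n) * (1 - 12 * (1 + M) * INR (k n) / INR n / 6 / 2) ^ n /\
   forall mu, 0 < mu <= 1 -> exp (- h n) <= mu ->
     (Psi (12 * (1 + M) * INR (k n) / INR n) mu)^2 / mu <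
     (1 + eta) * mu * (1 - 2 ^ (k n) * (1 - 12 * (1 + M) * INR (k n) / INR n / 6 / 2) ^ n).
Proof.
set (th := eta / (4 * (1 + eta))).
assert (Hth : 0 < th < 1/4).
{ unfold th. split. apply Rdiv_lt_0_compat; lra.
  apply Rmult_lt_reg_r with (r := 4 * (1+eta)). lra.
  unfold Rdiv. rewrite Rmult_assoc, Rinv_l by lra. lra. }
set (M := / th).
assert (HM : 0 < M) by (apply Rinv_0_lt_compat; lra).
assert (HMth : M * th = 1) by (unfold M; field; lra).
destruct hkO as [C [N1 HC]].
assert (HkR : forall n, 1 <= INR (k n)).
{ intros n. replace 1 with (INR 1) by reflexivity. apply le_INR. apply hk1. }
assert (Cpos : 0 < C).
{ set (m := Nat.max N1 3).
  assert (Hm : (N1 <= m)%nat) by (unfold m; lia).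
  pose proof (HC m Hm) as Hc. pose proof (HkR m).
  assert (H3 : 3 <= INR m) by (replace 3 with (INR 3) by (simpl; ring); apply le_INR; unfold m; lia).
  assert (Hl : 0 < ln (INR m)) by (rewrite <- ln_1; apply ln_increasing; lra).
  destruct (Rle_dec C 0) as [Hc0|Hc0]; [|lra].
  nra. }
set (eps := th / (24 * (1 + M) * C)).
assert (Heps : 0 < eps) by (unfold eps; apply Rdiv_lt_0_compat; [lra| apply Rmult_lt_0_compat; lra]).
destruct (ho eps Heps) as [N2 HH].
set (B := 12 * (1 + M) * C).
assert (HB : 0 < B) by (unfold B; apply Rmult_lt_0_compat; lra).
destruct (INR_archimed 1 (2 * B * Rabs (ln (2 * B)) + 4 * B) ltac:(lra)) as [N3 HN3].
rewrite Rmult_1_r in HN3.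
exists M, (Nat.max (Nat.max N1 N2) (Nat.max N3 3)).
split; [exact HM|].
intros n Hn.
assert (Hn1 : (N1 <= n)%nat) by lia.
assert (Hn2 : (N2 <= n)%nat) by lia.
assert (Hn3 : INR N3 <= INR n) by (apply le_INR; lia).
assert (H3 : 3 <= INR n) by (replace 3 with (INR 3) by (simpl; ring); apply le_INR; lia).
pose proof (HC n Hn1) as Hkn. pose proof (HH n Hn2) as Hhn. pose proof (HkR n) as Hk1.
set (K := INR (k n)) in *. set (x := INR n) in *.
assert (Hln1 : 1 <= ln x).
{ rewrite <- ln_exp with (x := 1). destruct (Req_dec (exp 1) x) as [E|E].
  rewrite E; lra. left. apply ln_increasing. apply exp_pos. pose proof exp_le_3. lra. }
assert (HBx : B * ln x <= x).
{ assert (Hl : ln x <= ln (2*B) + x / (2*B) - 1).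
  { pose proof (ln_le_sub1 (x / (2*B)) ltac:(apply Rdiv_lt_0_compat; lra)).
    unfold Rdiv in H at 1. rewrite ln_mult in H by (try apply Rinv_0_lt_compat; lra).
    rewrite ln_Rinv in H by lra. lra. }
  assert (B * ln x <= B * (ln (2*B) + x / (2*B) - 1)) by (apply Rmult_le_compat_l; lra).
  assert (B * (x / (2*B)) = x / 2) by (field; lra).
  assert (B * ln (2*B) <= B * Rabs (ln (2*B))) by (apply Rmult_le_compat_l; [lra|apply Rle_abs]).
  assert (0 <= B * Rabs (ln (2*B))) by (apply Rmult_le_pos; [lra|apply Rabs_pos]).
  nra. }
set (e := 12 * (1 + M) * K / x).
assert (He0 : 0 < e) by (unfold e; apply Rdiv_lt_0_compat; [apply Rmult_lt_0_compat|]; lra).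
assert (HeK : e * x = 12 * (1+M) * K) by (unfold e; field; lra).
assert (He1 : e <= 1).
{ assert (12 * (1+M) * K <= B * ln x) by (unfold B; replace (12*(1+M)*C*ln x) with (12*(1+M)*(C*ln x)) by ring; apply Rmult_le_compat_l; lra).
  apply Rmult_le_reg_r with (r := x). lra. lra. }
split; [lra|]. split.
{ apply INR_le. fold K x. nra. }
assert (HT : 2 ^ (k n) * (1 - e / 6 / 2) ^ n < th).
{ assert (H1 : (1 - e/6/2) ^ n <= exp (- (e/12)) ^ n).
  { apply pow_incr. split. lra. pose proof (exp_ineq1_le (- (e/12))). lra. }
  rewrite exp_pow_INR in H1. fold x in H1.
  replace (x * - (e/12)) with (- ((1+M) * K)) in H1 by nra.
  assert (H2 : 2 ^ (k n) <= exp 1 ^ (k n)).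
  { apply pow_incr. pose proof (exp_ineq1 1 ltac:(lra)). lra. }
  rewrite exp_pow_INR in H2. fold K in H2.
  assert (H3' : 2 ^ (k n) * (1 - e / 6 / 2) ^ n <= exp (K * 1) * exp (- ((1 + M) * K))).
  { apply Rmult_le_compat; try lra. apply pow_le; lra. apply pow_le; lra. }
  rewrite <- exp_plus in H3'.
  replace (K * 1 + - ((1 + M) * K)) with (- (M * K)) in H3' by ring.
  assert (H4 : exp (- (M * K)) <= exp (- M)).
  { destruct (Req_dec K 1) as [E|E]. rewrite E, Rmult_1_r. lra.
    left. apply exp_increasing. nra. }
  assert (H5 : exp (- M) * (1 + M) <= 1).
  { pose proof (exp_ineq1_le M). assert (exp (-M) * exp M = 1) by (rewrite <- exp_plus; replace (-M+M) with 0 by ring; apply exp_0).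
    assert (0 < exp (-M)) by apply exp_pos. nra. }
  assert (H6 : exp (- M) < th).
  { assert (0 < exp (-M)) by apply exp_pos. nra. }
  lra. }
fold e. split; [lra|].
intros mu Hmu Hhmu.
assert (Hlm : - ln mu <= h n).
{ assert (ln (exp (- h n)) <= ln mu).
  { destruct (Req_dec (exp (- h n)) mu) as [E|E]. rewrite E; lra. left. apply ln_increasing. apply exp_pos. lra. }
  rewrite ln_exp in H. lra. }
assert (Hlm0 : 0 <= - ln mu).
{ destruct (Req_dec mu 1) as [E|E]. rewrite E, ln_1. lra.
  assert (ln mu < 0) by (rewrite <- ln_1; apply ln_increasing; lra). lra. }
set (r := / (1 + e)).
assert (Hr : 1 / 2 <= r <= 1).
{ unfold r. split. apply Rmult_le_reg_r with (r := 1+e). lra. rewrite Rinv_l by lra. lra.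
  apply Rmult_le_reg_r with (r := 1+e). lra. rewrite Rinv_l by lra. lra. }
assert (Hr2 : 2 - 2 * r <= 2 * e).
{ unfold r. apply Rmult_le_reg_r with (r := 1+e). lra.
  replace ((2 - 2 * / (1 + e)) * (1 + e)) with (2 * e) by (field; lra). nra. }
assert (HPsi : (Psi e mu)^2 / mu = mu * exp ((2 - 2*r) * (- ln mu))).
{ unfold Psi. fold r. rewrite pw_pos by lra.
  replace ((exp (r * ln mu))^2) with (exp (2 * r * ln mu))
    by (simpl; rewrite Rmult_1_r, <- exp_plus; f_equal; ring).
  apply Rmult_eq_reg_l with (r := mu); [|lra].
  unfold Rdiv. rewrite <- Rmult_assoc, (Rmult_comm mu (exp _)), Rmult_assoc, Rinv_r by lra.
  rewrite Rmult_1_r. rewrite <- (exp_ln mu) at 2 3 by lra.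
  rewrite <- !exp_plus. f_equal. ring. }
rewrite HPsi.
assert (Ha : (2 - 2*r) * (- ln mu) <= th).
{ assert (S1 : (2 - 2*r) * (- ln mu) <= 2 * e * h n).
  { assert ((2 - 2*r) * (- ln mu) <= 2 * e * (- ln mu)) by (apply Rmult_le_compat_r; lra).
    assert (2 * e * (- ln mu) <= 2 * e * h n) by (apply Rmult_le_compat_l; lra). lra. }
  assert (S2 : h n <= eps * (x / (ln x)^2)) by (pose proof (Rle_abs (h n)); lra).
  assert (S3 : 2 * e * (eps * (x / (ln x)^2)) = 24 * (1+M) * K * eps / (ln x)^2) by (unfold e; field; split; nra).
  assert (S4 : 24 * (1+M) * K * eps / (ln x)^2 <= th / ln x).
  { unfold eps. apply Rmult_le_reg_r with (r := (ln x)^2). nra.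
    replace (24 * (1 + M) * K * (th / (24 * (1 + M) * C)) / ln x ^ 2 * ln x ^ 2) with (K * th / C) by (field; repeat split; nra).
    replace (th / ln x * ln x ^ 2) with (th * ln x) by (field; nra).
    apply Rmult_le_reg_r with (r := C). lra.
    replace (K * th / C * C) with (K * th) by (field; lra). nra. }
  assert (S5 : th / ln x <= th).
  { apply Rmult_le_reg_r with (r := ln x). lra. replace (th / ln x * ln x) with th by (field; lra). nra. }
  assert (0 <= 2 * e) by lra.
  assert (2 * e * h n <= 2 * e * (eps * (x / (ln x)^2))) by (apply Rmult_le_compat_l; lra).
  lra. }
assert (Hexp : exp ((2 - 2*r) * (- ln mu)) <= exp th).
{ destruct (Req_dec ((2 - 2*r) * (- ln mu)) th) as [E|E]. rewrite E; lra. left; apply exp_increasing; lra. }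
assert (Hexpth : exp th * (1 - th) <= 1).
{ pose proof (exp_ineq1_le (- th)). assert (exp th * exp (- th) = 1) by (rewrite <- exp_plus; replace (th + - th) with 0 by ring; apply exp_0).
  assert (0 < exp th) by apply exp_pos. nra. }
assert (Hfin : 1 <= (1 + eta) * (1 - th) * (1 - th)).
{ unfold th. apply Rmult_le_reg_r with (r := 16 * (1+eta)). lra.
  replace ((1 + eta) * (1 - eta / (4 * (1 + eta))) * (1 - eta / (4 * (1 + eta))) * (16 * (1 + eta)))
    with ((4 + 3 * eta) * (4 + 3 * eta)) by (field; lra). nra. }
set (L := 1 - 2 ^ k n * (1 - e / 6 / 2) ^ n) in *.
assert (HL : 1 - th < L) by (unfold L; lra).
assert (exp ((2 - 2*r) * (- ln mu)) < (1 + eta) * L).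
{ assert (0 < exp th) by apply exp_pos. nra. }
assert (0 < mu) by lra.
nra.
Qed.

Lemma Psi_1 e : Psi e 1 = 1.
Proof. unfold Psi. rewrite pw_pos by lra. rewrite ln_1, Rmult_0_r. apply exp_0. Qed.

Lemma Psi_0 e : Psi e 0 = 0.
Proof. unfold Psi. apply pw_npos. lra. Qed.

Lemma Psi_ge0 e x : 0 <= Psi e x.
Proof. apply pw_ge0. Qed.

Lemma IZR2 : 2 = INR 2. Proof. simpl. ring. Qed.
Lemma IZR4 : 4 = INR 4. Proof. simpl. ring. Qed.
Lemma IZR6 : 6 = INR 6. Proof. simpl. ring. Qed.

Lemma TP' e a0 a1 b0 b1 : 0 < e -> e <= 1 -> 0 <= a0 -> 0 <= a1 -> 0 <= b0 -> 0 <= b1 ->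
  (1+e/INR 6)*(Psi e a0 * Psi e b0 + Psi e a1 * Psi e b1)
  + (1-e/INR 6)*(Psi e a0 * Psi e b1 + Psi e a1 * Psi e b0)
  <= INR 4 * Psi e ((a0+a1)/INR 2) * Psi e ((b0+b1)/INR 2).
Proof.
intros. rewrite <- IZR2, <- IZR4, <- IZR6. apply TP; auto.
Qed.

Module MC.
From mathcomp Require Import all_boot all_order all_algebra.
From mathcomp Require Import Rstruct.
From mathcomp Require Import ring lra zify.
Import Order.TTheory GRing.Theory Num.Theory.

Bind Scope ring_scope with R.
Section Comb.
Local Open Scope ring_scope.

Definition ccons n (b : bool) (z : cube n) : cube n.+1 :=
  [ffun i => if unlift ord0 i is Some j then z j else b].
Definition ctail n (x : cube n.+1) : cube n := [ffun j => x (lift ord0 j)].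
Arguments ccons {n}. Arguments ctail {n}.

Lemma ccons0 n b (z : cube n) : ccons b z ord0 = b.
Proof. by rewrite /ccons ffunE unlift_none. Qed.
Lemma cconsS n b (z : cube n) j : ccons b z (lift ord0 j) = z j.
Proof. by rewrite /ccons ffunE liftK. Qed.

Lemma big_cube_S (T : Type) (idx : T) (op : Monoid.com_law idx) n (F : cube n.+1 -> T) :
  \big[op/idx]_(x : cube n.+1) F x = \big[op/idx]_(b : bool) \big[op/idx]_(z : cube n) F (ccons b z).
Proof.
rewrite pair_big /=.
rewrite (reindex (fun p : bool * cube n => ccons p.1 p.2)) //=.
exists (fun x : cube n.+1 => (x ord0, ctail x)) => [[b z] _|x _] /=.
  rewrite ccons0; congr pair; apply/ffunP => j; by rewrite ffunE cconsS.
apply/ffunP => i; rewrite /ccons ffunE.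
case: (unliftP ord0 i) => [j ->|->]; by rewrite ?ffunE.
Qed.

Definition qf (rho : R) (b c : bool) : R := if b == c then 1 + rho else 1 - rho.
Definition Wn n rho (A B : {set cube n}) : R :=
  \sum_(x in A) \sum_(y in B) \prod_(i < n) qf rho (x i) (y i).
Definition slice n (A : {set cube n.+1}) b : {set cube n} := [set z | ccons b z \in A].

Arguments Wn {n}. Arguments slice {n}.
Section HC.
Variable rho : R.
Hypothesis rho01 : 0 <= rho <= 1.
Variable Psi : R -> R.
Hypothesis Psi0 : Psi 0 = 0.
Hypothesis Psi1 : Psi 1 = 1.
Hypothesis Psi_ge0 : forall x, 0 <= Psi x.
Hypothesis TPh : forall a0 a1 b0 b1 : R, 0 <= a0 -> 0 <= a1 -> 0 <= b0 -> 0 <= b1 ->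
  (1 + rho) * (Psi a0 * Psi b0 + Psi a1 * Psi b1) + (1 - rho) * (Psi a0 * Psi b1 + Psi a1 * Psi b0)
  <= 4 * Psi ((a0+a1)/2) * Psi ((b0+b1)/2).

Definition Phi n (a : nat) : R := 2 ^+ n * Psi (a%:R / 2 ^+ n).

Lemma qf_ge0 b c : 0 <= qf rho b c.
Proof. case/andP: rho01 => h1 h2; rewrite /qf; case: (b == c); lra. Qed.

Lemma card_slice n (A : {set cube n.+1}) :
  (#|A|%:R : R) = #|slice A true|%:R + #|slice A false|%:R.
Proof.
rewrite -!sum1_card !natr_sum big_mkcond /= big_cube_S big_bool /=.
by congr (_ + _); rewrite [in RHS]big_mkcond /=; apply: eq_bigr => z _; rewrite inE.
Qed.

Lemma inner_S n b (z : cube n) (B : {set cube n.+1}) :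
  \sum_(y in B) \prod_(i < n.+1) qf rho (ccons b z i) (y i) =
  \sum_(c : bool) qf rho b c * \sum_(w in slice B c) \prod_(i < n) qf rho (z i) (w i).
Proof.
rewrite big_mkcond big_cube_S /=; apply: eq_bigr => c _.
rewrite mulr_sumr [in RHS]big_mkcond /=; apply: eq_bigr => w _.
rewrite inE; case: (ccons c w \in B); last by [].
rewrite big_ord_recl ccons0 ccons0; congr (_ * _).
by apply: eq_bigr => i _; rewrite !cconsS.
Qed.

Lemma Wn_S n (A B : {set cube n.+1}) :
  Wn rho A B = \sum_(b : bool) \sum_(c : bool) qf rho b c * Wn rho (slice A b) (slice B c).
Proof.
rewrite /Wn big_mkcond big_cube_S /=.
apply: eq_bigr => b _.
transitivity (\sum_(z : cube n) \sum_(c : bool) (if ccons b z \in A then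
   qf rho b c * \sum_(w in slice B c) \prod_(i < n) qf rho (z i) (w i) else 0)).
  apply: eq_bigr => z _; case: ifP => _; first exact: inner_S.
  by rewrite big1.
rewrite exchange_big /=; apply: eq_bigr => c _.
rewrite mulr_sumr [in RHS]big_mkcond /=; apply: eq_bigr => z _.
by rewrite inE; case: ifP.
Qed.

Lemma card_cube0 (A : {set cube 0}) : (#|A| <= 1)%N.
Proof.
apply: (leq_trans (max_card _)). by rewrite /cube card_ffun card_ord.
Qed.

Lemma HC n (A B : {set cube n}) : Wn rho A B <= Phi n #|A| * Phi n #|B|.
Proof.
elim: n A B => [|n IH] A B.
  rewrite /Wn /Phi expr0 !divr1 !mul1r.
  under eq_bigr do under eq_bigr do rewrite big_ord0.
  rewrite sumr_const /= sumr_const.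
  move: (card_cube0 A) (card_cube0 B).
  case: #|A| => [|[|//]] _; case: #|B| => [|[|//]] _ /=;
    by rewrite ?Psi0 ?Psi1 ?mulr0 ?mul0r ?mulr1 ?mul0rn ?mulr1n ?lexx.
rewrite Wn_S !big_bool /= /qf /=.
set K : R := 2 ^+ n.
have hK : 0 < K by rewrite /K exprn_gt0.
have E : forall x y : R, (x + y) / 2 ^+ n.+1 = (x / K + y / K) / 2.
  by move=> x y; rewrite exprS /K; field; rewrite ?lt0r_neq0 ?exprn_gt0 // ltr0n.
rewrite /Phi !card_slice !E.
have hi : forall a : nat, 0 <= a%:R / K by move=> a; rewrite divr_ge0 // ltW.
have T := TPh _ _ _ _ (hi #|slice A true|) (hi #|slice A false|) (hi #|slice B true|) (hi #|slice B false|).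
have H11 := IH (slice A true) (slice B true).
have H10 := IH (slice A true) (slice B false).
have H01 := IH (slice A false) (slice B true).
have H00 := IH (slice A false) (slice B false).
rewrite /Phi -/K in H11 H10 H01 H00.
case/andP: rho01 => r0 r1.
have q1 : 0 <= 1 + rho by lra.
have q2 : 0 <= 1 - rho by lra.
move: T H11 H10 H01 H00.
set PA1 := Psi (_ / K). set PA0 := Psi (#|slice A false|%:R / K).
set PB1 := Psi (#|slice B true|%:R / K). set PB0 := Psi (#|slice B false|%:R / K).
set MA := Psi (_ / 2). set MB := Psi ((_ + _) / 2).
move=> T H11 H10 H01 H00.
have L11 := ler_wpM2l q1 H11. have L00 := ler_wpM2l q1 H00.
have L10 := ler_wpM2l q2 H10. have L01 := ler_wpM2l q2 H01.
have KK : 0 <= K * K by rewrite mulr_ge0 // ltW.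
have T' := ler_wpM2l KK T.
rewrite exprS -/K.
have -> : 2 * K * MA * (2 * K * MB) = K * K * (4 * MA * MB) by ring.
apply: le_trans T'.
have -> : K * K * ((1 + rho) * (PA1 * PB1 + PA0 * PB0) + (1 - rho) * (PA1 * PB0 + PA0 * PB1)) =
  (1 + rho) * (K * PA1 * (K * PB1)) + (1 - rho) * (K * PA1 * (K * PB0))
  + ((1 - rho) * (K * PA0 * (K * PB1)) + (1 + rho) * (K * PA0 * (K * PB0))) by ring.
lra.
Qed.

End HC.

Lemma addn_sub_aux (a b c : nat) : (a + b)%N = c -> b = (c - a)%N.
Proof. lia. Qed.

Section Sub.
Variable n : nat.
Variable X : {set cube n}.
Local Notation ag := (@agree n).

Definition EE (K : {set 'I_n}) : R := \sum_(x in X) \sum_(y in X) (ag K x y)%:R.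
Definition GG (K : {set 'I_n}) : R := 2 ^+ #|K| * EE K.

Definition proj (K : {set 'I_n}) (x : cube n) : cube n := [ffun j => if j \in K then x j else false].

Lemma agree_proj K x y : ag K x y = (proj K x == proj K y).
Proof.
apply/idP/eqP => [/forall_inP h | h].
  by apply/ffunP => j; rewrite !ffunE; case: ifP => // /h /eqP.
apply/forall_inP => i iK; move/ffunP: h => /(_ i); rewrite !ffunE iK => ->.
by [].
Qed.

Lemma psd K (F : cube n -> R) : 0 <= \sum_x \sum_y (ag K x y)%:R * F x * F y.
Proof.
under eq_bigr do under eq_bigr do rewrite agree_proj.
rewrite (partition_big (proj K) predT) //=.
apply: sumr_ge0 => c _.
have -> : \sum_(x | proj K x == c) \sum_y ((proj K x == proj K y)%:R * F x * F y)
   = (\sum_(x | proj K x == c) F x) * (\sum_(y | proj K y == c) F y).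
  rewrite mulr_suml; apply: eq_bigr => x /eqP hx.
  rewrite mulr_sumr [in RHS]big_mkcond /=; apply: eq_bigr => y _.
  by rewrite hx eq_sym; case: (proj K y == c); rewrite ?mul1r ?mul0r ?mulr0.
by rewrite -expr2 sqr_ge0.
Qed.

Lemma agreeU1 i K x y : ag (i |: K) x y = (x i == y i) && ag K x y.
Proof.
apply/forall_inP/andP => [h | [h1 /forall_inP h2] j].
  split; first by apply/h; rewrite setU11.
  by apply/forall_inP => j jK; apply: h; rewrite setU1r.
by case/setU1P => [-> //|]; apply: h2.
Qed.

Lemma EE_mono (i : 'I_n) (K : {set 'I_n}) : EE K <= 2 * EE (i |: K).
Proof.
pose F x : R := (x \in X)%:R * (if x i then 1 else -1).
have := psd K F.
have -> : \sum_x \sum_y (ag K x y)%:R * F x * F y = \sum_x \sum_y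
   (if x \in X then (if y \in X then 2 * (ag (i |: K) x y)%:R - (ag K x y)%:R else 0) else 0).
  apply: eq_bigr => x _; apply: eq_bigr => y _.
  rewrite /F agreeU1.
  by case: (x \in X); case: (y \in X); case: (x i); case: (y i); case: (ag K x y) => /=; ring.
have -> : \sum_x \sum_y
   (if x \in X then (if y \in X then 2 * (ag (i |: K) x y)%:R - (ag K x y)%:R else 0) else 0)
   = 2 * EE (i |: K) - EE K.
  rewrite /EE mulr_sumr -sumrB [in RHS]big_mkcond /=; apply: eq_bigr => x _.
  case: (x \in X); last by rewrite big1.
  by rewrite mulr_sumr -sumrB [in RHS]big_mkcond.
by rewrite subr_ge0.
Qed.

Lemma GG_mono (i : 'I_n) (K : {set 'I_n}) : i \notin K -> GG K <= GG (i |: K).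
Proof.
move=> iK; rewrite /GG cardsU1 iK add1n exprS.
rewrite (mulrC 2) -mulrA; apply: ler_wpM2l; first exact: exprn_ge0.
exact: EE_mono.
Qed.

Definition SS j := \sum_(K : {set 'I_n} | #|K| == j) GG K.

Lemma EE_ge0 K : 0 <= EE K.
Proof. by apply: sumr_ge0 => x _; apply: sumr_ge0 => y _; rewrite ler0n. Qed.

Lemma GG_ge0 K : 0 <= GG K.
Proof. by rewrite /GG mulr_ge0 ?exprn_ge0 ?EE_ge0. Qed.

Lemma SS_ge0 j : 0 <= SS j.
Proof. by apply: sumr_ge0 => K _; apply: GG_ge0. Qed.

Lemma reidx (i : 'I_n) (j : nat) (f : {set 'I_n} -> R) :
  \sum_(K : {set 'I_n} | (#|K| == j) && (i \notin K)) f (i |: K) = \sum_(K : {set 'I_n} | (#|K| == j.+1) && (i \in K)) f K.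
Proof.
rewrite [RHS](reindex_onto (fun K => i |: K) (fun K => K :\ i)); last first.
  by move=> K /andP[_ iK]; rewrite setD1K.
apply: eq_bigl => K; rewrite setU11 andbT.
case iK: (i \in K) => /=.
  rewrite andbF; symmetry; apply: negbTE; apply/negP => /andP[_ /eqP h].
  by move: iK; rewrite -h !inE eqxx.
by rewrite andbT setU1K ?iK // eqxx andbT cardsU1 iK.
Qed.

Lemma swap_cond (P : {set 'I_n} -> bool) (Q : {set 'I_n} -> 'I_n -> bool) (F : {set 'I_n} -> 'I_n -> R) :
  \sum_(K | P K) \sum_(i | Q K i) F K i = \sum_i \sum_(K | P K && Q K i) F K i.
Proof.
transitivity (\sum_K \sum_i (if P K && Q K i then F K i else 0)).
  rewrite big_mkcond; apply: eq_bigr => K _; case: (P K) => /=; first by rewrite big_mkcond.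
  by rewrite big1.
by rewrite exchange_big; apply: eq_bigr => i _; rewrite [RHS]big_mkcond.
Qed.

Lemma SS_step j : (n - j)%:R * SS j <= (j.+1)%:R * SS j.+1.
Proof.
rewrite /SS mulr_sumr.
apply: (@le_trans _ _ (\sum_(K : {set 'I_n} | #|K| == j) \sum_(i in ~: K) GG (i |: K))).
  apply: ler_sum => K /eqP hK.
  have hc : #|~: K| = (n - j)%N.
    by have := cardsC K; rewrite card_ord hK; lia.
  have -> : (n - j)%:R * GG K = \sum_(i in ~: K) GG K by rewrite sumr_const hc mulr_natl.
  by apply: ler_sum => i; rewrite inE => iK; apply: GG_mono.
rewrite mulr_sumr swap_cond.
have -> : \sum_(K : {set 'I_n} | #|K| == j.+1) (j.+1)%:R * GG K = \sum_(K : {set 'I_n} | #|K| == j.+1) \sum_(i in K) GG K.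
  by apply: eq_bigr => K /eqP hK; rewrite sumr_const hK mulr_natl.
rewrite swap_cond.
apply: ler_sum => i _.
under eq_bigl do rewrite inE.
by rewrite reidx.
Qed.

Lemma avg_step j : (j < n)%N -> SS j / 'C(n, j)%:R <= SS j.+1 / 'C(n, j.+1)%:R.
Proof.
move=> hj.
have c0 : 0 < ('C(n, j)%:R : R) by rewrite ltr0n bin_gt0 ltnW.
have c1 : 0 < ('C(n, j.+1)%:R : R) by rewrite ltr0n bin_gt0.
have e0 : 0 < ((j.+1)%:R : R) by rewrite ltr0n.
have hb : ((j.+1)%:R * 'C(n, j.+1)%:R : R) = (n - j)%:R * 'C(n, j)%:R by rewrite -!natrM mul_bin_left.
have hs := SS_step j.
have h0 := SS_ge0 j. have h1 := SS_ge0 j.+1.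
rewrite ler_pdivrMr // mulrAC ler_pdivlMr //.
nra.
Qed.

Lemma avg_mono k j : (k <= j <= n)%N -> SS k / 'C(n, k)%:R <= SS j / 'C(n, j)%:R.
Proof.
elim: j => [|j IH] /andP[hkj hjn].
  by move: hkj; rewrite leqn0 => /eqP ->.
case: (ltngtP k j.+1) hkj => // [hk _ | -> //].
apply: (le_trans _ (avg_step _ hjn)).
by apply: IH; rewrite -ltnS hk ltnW.
Qed.

Lemma PE (a b : 'I_n -> R) :
  \prod_i (a i + b i) = \sum_(J : {set 'I_n}) \prod_i (if i \in J then a i else b i).
Proof.
have -> : \prod_i (a i + b i) = \prod_i \sum_(c : bool) (if c then a i else b i).
  by apply: eq_bigr => i _; rewrite big_bool.
rewrite bigA_distr_bigA /=.
rewrite (reindex (fun J : {set 'I_n} => [ffun i => i \in J])) /=; last first.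
  exists (fun f : {ffun 'I_n -> bool} => [set i | f i]) => [J _ | f _].
    by apply/setP => i; rewrite inE ffunE.
  by apply/ffunP => i; rewrite !ffunE inE.
by apply: eq_bigr => J _; apply: eq_bigr => i _; rewrite ffunE.
Qed.

Lemma sum_level (F : {set 'I_n} -> R) :
  \sum_J F J = \sum_(j < n.+1) \sum_(J : {set 'I_n} | #|J| == j) F J.
Proof.
rewrite (partition_big (fun J : {set 'I_n} => inord #|J| : 'I_n.+1) predT) //=.
apply: eq_bigr => j _; apply: eq_bigl => J.
rewrite -val_eqE /= inordK // ltnS.
by apply: leq_trans (max_card _) _; rewrite card_ord.
Qed.

Variable rho : R.
Hypothesis rho01 : 0 <= rho <= 1.

Definition ww (J : {set 'I_n}) : R := \prod_(i < n) (if i \in J then rho else 1 - rho).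

Lemma ww_card J : ww J = rho ^+ #|J| * (1 - rho) ^+ (n - #|J|).
Proof.
rewrite /ww (bigID (mem J)) /=.
rewrite (eq_bigr (fun _ => rho)); last by move=> i ->.
rewrite [X in _ * X](eq_bigr (fun _ => 1 - rho)); last by move=> i /negbTE ->.
rewrite !prodr_const; congr (_ * _ ^+ _).
have -> : #|[pred i | i \notin J]| = #|~: J| by apply: eq_card => i; rewrite !inE.
by apply: addn_sub_aux; have := cardsC J; rewrite card_ord.
Qed.

Lemma prod_agree (J : {set 'I_n}) (x y : cube n) :
  \prod_i (if i \in J then 2 * rho * (x i == y i)%:R else 1 - rho)
  = 2 ^+ #|J| * ww J * (ag J x y)%:R.
Proof.
rewrite ww_card (bigID (mem J)) /=.
rewrite [X in _ * X](eq_bigr (fun _ => 1 - rho)); last by move=> i /negbTE ->.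
rewrite [X in _ * X]prodr_const.
have -> : #|[pred i | i \notin J]| = (n - #|J|)%N.
  have -> : #|[pred i | i \notin J]| = #|~: J| by apply: eq_card => i; rewrite !inE.
  by apply: addn_sub_aux; have := cardsC J; rewrite card_ord.
case hag : (ag J x y).
  rewrite (eq_bigr (fun _ => 2 * rho)); last first.
    by move=> i iJ; rewrite iJ; move/forall_inP: hag => /(_ i iJ) ->; rewrite mulr1.
  by rewrite prodr_const exprMn mulr1 mulrA.
move/negbT: hag; rewrite /agree negb_forall_in => /exists_inP [i iJ hi].
rewrite (bigD1 i) //= iJ (negbTE hi) mulr0 !mul0r mulr0.
by [].
Qed.

Lemma sumJ : \sum_(J : {set 'I_n}) ww J * GG J = Wn rho X X.
Proof.
transitivity (\sum_(J : {set 'I_n}) \sum_(x in X) \sum_(y in X) 2 ^+ #|J| * ww J * (ag J x y)%:R).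
  apply: eq_bigr => J _; rewrite /GG /EE mulrA (mulrC (ww J)) mulr_sumr.
  by apply: eq_bigr => x _; rewrite mulr_sumr.
rewrite exchange_big /Wn; apply: eq_bigr => x _.
rewrite exchange_big; apply: eq_bigr => y _.
under eq_bigr do rewrite -prod_agree.
rewrite -PE; apply: eq_bigr => i _.
by rewrite /qf; case: (x i == y i) => /=; ring.
Qed.

Lemma sum_levelJ : \sum_(J : {set 'I_n}) ww J * GG J =
  \sum_(j < n.+1) rho ^+ j * (1 - rho) ^+ (n - j) * SS j.
Proof.
rewrite sum_level; apply: eq_bigr => j _.
rewrite /SS mulr_sumr; apply: eq_bigr => J /eqP hJ.
by rewrite ww_card hJ.
Qed.

Definition bterm (j : nat) : R := (1 - rho) ^+ (n - j) * rho ^+ j *+ 'C(n, j).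

Lemma lowerJ k : (k <= n)%N ->
  SS k / 'C(n, k)%:R * \sum_(j < n.+1 | (k <= j)%N) bterm j <= \sum_(J : {set 'I_n}) ww J * GG J.
Proof.
move=> hk; case/andP: rho01 => r0 r1.
rewrite sum_levelJ mulr_sumr.
apply: (@le_trans _ _ (\sum_(j < n.+1 | (k <= j)%N) rho ^+ j * (1 - rho) ^+ (n - j) * SS j)).
  apply: ler_sum => j hkj.
  have hjn : (j <= n)%N by rewrite -ltnS.
  have hc : 0 < ('C(n, j)%:R : R) by rewrite ltr0n bin_gt0.
  have ha : SS k / 'C(n, k)%:R <= SS j / 'C(n, j)%:R by apply: avg_mono; rewrite hkj hjn.
  rewrite /bterm -[_ *+ 'C(n, j)]mulr_natr.
  have hp : 0 <= rho ^+ j * (1 - rho) ^+ (n - j) by rewrite mulr_ge0 ?exprn_ge0 // subr_ge0.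
  rewrite ler_pdivlMr // in ha.
  have -> : SS k / 'C(n, k)%:R * ((1 - rho) ^+ (n - j) * rho ^+ j * 'C(n, j)%:R)
    = rho ^+ j * (1 - rho) ^+ (n - j) * (SS k / 'C(n, k)%:R * 'C(n, j)%:R) by ring.
  by rewrite ler_wpM2l //.
rewrite [leRHS](bigID (fun j : 'I_n.+1 => (k <= j)%N)) /= lerDl.
apply: sumr_ge0 => j _.
by rewrite mulr_ge0 ?SS_ge0 // mulr_ge0 ?exprn_ge0 // subr_ge0.
Qed.

Lemma bterm_total : \sum_(j < n.+1) bterm j = 1.
Proof.
by rewrite /bterm -exprDn subrK expr1n.
Qed.

Lemma upper_tail k : \sum_(j < n.+1 | (k <= j)%N) bterm j >= 1 - 2 ^+ k * (1 - rho / 2) ^+ n.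
Proof.
case/andP: rho01 => r0 r1.
have := bterm_total; rewrite (bigID (fun j : 'I_n.+1 => (k <= j)%N)) /= => ht.
suff : \sum_(j < n.+1 | ~~ (k <= j)%N) bterm j <= 2 ^+ k * (1 - rho / 2) ^+ n by lra.
have -> : 1 - rho / 2 = (1 - rho) + rho / 2 by field.
rewrite (exprDn (1 - rho) (rho / 2) n) mulr_sumr.
apply: (@le_trans _ _ (\sum_(j < n.+1 | ~~ (k <= j)%N) 2 ^+ k * ((1 - rho) ^+ (n - j) * (rho / 2) ^+ j *+ 'C(n, j)))).
  apply: ler_sum => j hj.
  rewrite /bterm -[_ *+ 'C(n, j)]mulr_natr -[(_ * (rho / 2) ^+ j) *+ 'C(n, j)]mulr_natr expr_div_n.
  have h2 : 0 < (2 : R) ^+ j by rewrite exprn_gt0.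
  have -> : 2 ^+ k * ((1 - rho) ^+ (n - j) * (rho ^+ j / 2 ^+ j) * 'C(n, j)%:R)
     = (2 ^+ k / 2 ^+ j) * ((1 - rho) ^+ (n - j) * rho ^+ j * 'C(n, j)%:R).
    by field; rewrite lt0r_neq0.
  rewrite -[leLHS]mul1r; apply: ler_wpM2r.
    by rewrite !mulr_ge0 ?exprn_ge0 ?subr_ge0 ?ler0n.
  rewrite ler_pdivlMr // mul1r ler_eXn2l //.
  by apply: ltnW; rewrite ltnNge.
  lra.
rewrite [X in _ <= X](bigID (fun j : 'I_n.+1 => (k <= j)%N)) /= -[X in X <= _]add0r lerD2r.
apply: sumr_ge0 => j _.
by rewrite mulr_ge0 ?exprn_ge0 // mulrn_wge0 // mulr_ge0 ?exprn_ge0 ?subr_ge0 ?divr_ge0.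
Qed.

End Sub.
Arguments EE {n}. Arguments GG {n}. Arguments SS {n}. Arguments ww {n}.

Lemma trans_EE n k (X : {set cube n}) :
  ((trans_count n k X)%:R : R) = \sum_(K : {set 'I_n} | #|K| == k) EE X K.
Proof.
rewrite /trans_count natr_sum; under eq_bigr do rewrite natr_sum.
rewrite exchange_big /=; apply: eq_bigr => K _.
rewrite /EE; apply: eq_bigr => x _.
rewrite -sum1_card natr_sum big_mkcond [RHS]big_mkcond /=; apply: eq_bigr => y _.
by rewrite inE; case: (y \in X); case: (agree _ K x y).
Qed.

Lemma SS_trans n k (X : {set cube n}) :
  SS X k = 2 ^+ k * (trans_count n k X)%:R.
Proof.
rewrite trans_EE /SS /GG mulr_sumr; apply: eq_bigr => K /eqP ->.
by [].
Qed.

End Comb.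


Local Open Scope ring_scope.
Lemma key_mc n k (X : {set cube n}) (e : R) : 0 < e -> e <= 1 -> (k <= n)%N -> (0 < #|X|)%N ->
  (trans_count n k X)%:R / (#|X|%:R * 'C(n, k)%:R * 2 ^+ (n - k)) * (1 - 2 ^+ k * (1 - e / 6 / 2) ^+ n)
  <= Psi e (#|X|%:R / 2 ^+ n) ^+ 2 / (#|X|%:R / 2 ^+ n).
Proof.
move=> e0 e1 hkn hX.
set rho := e / 6.
have rho01 : 0 <= rho <= 1 by rewrite /rho; apply/andP; split; lra.
have TPh : forall a0 a1 b0 b1 : R, 0 <= a0 -> 0 <= a1 -> 0 <= b0 -> 0 <= b1 ->
  (1 + rho) * (Psi e a0 * Psi e b0 + Psi e a1 * Psi e b1) + (1 - rho) * (Psi e a0 * Psi e b1 + Psi e a1 * Psi e b0)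
  <= 4 * Psi e ((a0+a1)/2) * Psi e ((b0+b1)/2).
  move=> a0 a1 b0 b1 h0 h1 h2 h3.
  have := TP' e a0 a1 b0 b1 (elimT RltP e0) (elimT RleP e1) (elimT RleP h0) (elimT RleP h1) (elimT RleP h2) (elimT RleP h3).
  by rewrite !INRE => /RleP.
have hHC := HC rho rho01 (Psi e) (Psi_0 e) (Psi_1 e) TPh n X X.
rewrite -(sumJ n X rho) in hHC.
have hlow := lowerJ n X rho rho01 k hkn.
have hup := upper_tail n rho rho01 k.
rewrite SS_trans in hlow.
set T : R := (trans_count n k X)%:R in hlow *.
set c : R := #|X|%:R.
set C : R := 'C(n, k)%:R in hlow *.
set P := \sum_(j < n.+1 | (k <= j)%N) bterm n rho j in hlow hup *.
set W := \sum_(J : {set 'I_n}) ww n rho J * GG n X J in hlow hHC.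
set K2 : R := 2 ^+ k in hlow *.
set Q : R := 2 ^+ (n - k).
have hN : (2 : R) ^+ n = K2 * Q by rewrite /K2 /Q -exprD subnKC.
rewrite hN.
move: hHC; rewrite /Phi hN -/c.
set Ps := Psi e (c / (K2 * Q)) => hHC.
have cpos : 0 < c by rewrite /c ltr0n.
have Cpos : 0 < C by rewrite /C ltr0n bin_gt0.
have K2pos : 0 < K2 by rewrite /K2 exprn_gt0.
have Qpos : 0 < Q by rewrite /Q exprn_gt0.
have Tge0 : 0 <= T by rewrite /T ler0n.
have pge0 : 0 <= T / (c * C * Q) by rewrite divr_ge0 // !mulr_ge0 // ltW.
apply: (@le_trans _ _ (T / (c * C * Q) * P)).
  by apply: ler_wpM2l.
have -> : T / (c * C * Q) * P = (K2 * T / C * P) / (c * (K2 * Q)).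
  by field; rewrite !lt0r_neq0.
rewrite ler_pdivrMr; last by rewrite !mulr_gt0.
have -> : Ps ^+ 2 / (c / (K2 * Q)) * (c * (K2 * Q)) = K2 * Q * Ps * (K2 * Q * Ps).
  by field; rewrite !lt0r_neq0.
exact: (le_trans hlow hHC).
Qed.

Lemma mu_le1_mc n (X : {set cube n}) : (#|X|%:R : R) / 2 ^+ n <= 1.
Proof.
rewrite ler_pdivrMr ?exprn_gt0 // mul1r.
have : (#|X| <= 2 ^ n)%N.
  by apply: (leq_trans (max_card _)); rewrite /cube card_ffun card_bool card_ord.
by rewrite -(ler_nat R) natrX.
Qed.

Local Open Scope R_scope.

Lemma key_std n k (X : cube_set n) (e : R) : 0 < e -> e <= 1 -> le k n -> 0 < mu n X ->
  prob_TX n k X * (1 - 2 ^ k * (1 - e / 6 / 2) ^ n) <= (Psi e (mu n X)) ^ 2 / mu n X.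
Proof.
move=> e0 e1 hkn hmu.
have hX : (0 < #|X|)%N.
  move: hmu; rewrite /mu /card_cube_set; case: #|X| => //= h.
  by exfalso; move: h; rewrite /Rdiv Rmult_0_l; apply: Rlt_irrefl.
rewrite /prob_TX /mu /card_cube_set /nbinom IZR2 IZR6 !INRE !RpowE.
apply/RleP.
apply: key_mc; first exact/RltP.
- exact/RleP.
- by apply/ssrnat.leP.
- exact: hX.
Qed.

Lemma mu_le1 n (X : cube_set n) : mu n X <= 1.
Proof.
rewrite /mu /card_cube_set IZR2 !INRE !RpowE.
exact/RleP/mu_le1_mc.
Qed.

End MC.

Bind Scope R_scope with R.
Open Scope R_scope.

Theorem claimD (k : nat -> nat) (h : nat -> R)
  (hk1 : forall n : nat, (1 <= k n)%nat)
  (hkO : exists (C : R) (N : nat), forall n : nat, (N <= n)%nat ->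
           INR (k n) <= C * ln (INR n))
  (ho : forall eps : R, 0 < eps -> exists N : nat, forall n : nat, (N <= n)%nat ->
           Rabs (h n) <= eps * (INR n / (ln (INR n)) ^ 2)) :
  forall eta : R, 0 < eta ->
  exists n0 : nat, forall n : nat, (n0 <= n)%nat ->
  forall X : cube_set n,
    @mu n X >= exp (- h n) ->
    prob_TX n (k n) X < (1 + eta) * @mu n X.
Proof.
intros eta heta.
destruct (asym k h hk1 hkO ho eta heta) as [M [n0 [HM Hn]]].
exists n0. intros n Hn0 X HX.
destruct (Hn n Hn0) as [He [Hkn [HL Hmain]]].
set (e := 12 * (1 + M) * INR (k n) / INR n) in *.
set (L := 1 - 2 ^ k n * (1 - e / 6 / 2) ^ n) in *.
assert (Hmu0 : 0 < mu n X) by (pose proof (exp_pos (- h n)); lra).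
assert (Hmu1 : mu n X <= 1) by apply MC.mu_le1.
pose proof (Hmain (mu n X) (conj Hmu0 Hmu1) (Rge_le _ _ HX)) as H1.
pose proof (MC.key_std n (k n) X e (proj1 He) (proj2 He) Hkn Hmu0) as H2.
fold L in H2.
apply (Rmult_lt_reg_r L); [exact HL|].
lra.
Qed.
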